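(* Let $t_i=i^\alpha$ for $i\ge1$ with $0<\alpha\le1/3$, and let $n(t)=\#\{k\ge1: t_k\le t\}=[t^{1/\alpha}]$ for $t\ge 0$. Let $M\ge1$ be an integer and write \[ I_M(u)=u^3\int_0^{t_M}\frac{n(t)}{t^2(t^2+u^2+ut\sqrt2)}\,dt . \] (i) There is a constant $C>0$ depending only on $\alpha$ such that if $u\ge t_M$, then $I_M(u)\ge Cu(M^{1-\alpha}-1)$. (ii) If $0<\alpha<1/3$, there is a constant $C>0$ depending only on $\alpha$ such that for $0\le u\le t_M$, \[ I_M(u)\ge C\left[\frac{u^{1/\alpha}-u}{1-\alpha}+u^3\,\frac{M^{1-3\alpha}-\max(u,1)^{1/\alpha-3}}{1-3\alpha}\right]. \] (iii) If $\alpha=1/3$, there is a constant $C>0$ such that for $0\le u\le t_M$, \[ I_M(u)\ge Cu^3\log\frac{t_M}{\max(u,1)}. \]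
   Context: $[\cdot]$ denotes the integer part. The constants do not depend on $M$ or $u$. *)

(* Defs.v *)
From Stdlib Require Import Reals.
From Coquelicot Require Import Coquelicot.
Open Scope R_scope.

(* Real power x^a for x >= 0, with the convention 0^a = 0 (used only with a > 0,
   or with x >= 1). Stdlib's Rpower 0 a = 1, hence the guard. *)
Definition rpow (x a : R) : R := if Rle_dec x 0 then 0 else Rpower x a.

Definition tseq (alpha : R) (i : nat) : R := rpow (INR i) alpha.

Definition ncount (alpha t : R) : R := IZR (Int_part (rpow t (1 / alpha))).

Definition IM (alpha : R) (M : nat) (u : R) : R :=
  u ^ 3 * RInt (fun t => ncount alpha t / (t ^ 2 * (t ^ 2 + u ^ 2 + u * t * sqrt 2)))
               0 (tseq alpha M).

(* Main.v *)
Require Import Defs.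
From Stdlib Require Import Reals Lra Lia.
From Coquelicot Require Import Coquelicot.
Open Scope R_scope.

Definition F (alpha u t : R) : R :=
  ncount alpha t / (t ^ 2 * (t ^ 2 + u ^ 2 + u * t * sqrt 2)).

Lemma rpow_pos x a : 0 < x -> rpow x a = Rpower x a.
Proof. intros. unfold rpow. destruct (Rle_dec x 0); lra. Qed.

Lemma Rpower_1l y : Rpower 1 y = 1.
Proof. unfold Rpower. rewrite ln_1, Rmult_0_r. apply exp_0. Qed.

Lemma Rpower_gt0 x y : 0 < Rpower x y.
Proof. unfold Rpower. apply exp_pos. Qed.

Lemma Rpower_ge1 x y : 0 <= y -> 1 <= x -> 1 <= Rpower x y.
Proof. intros. rewrite <- (Rpower_1l y). apply Rle_Rpower_l; lra. Qed.

Lemma tseq_ge1 alpha k : 0 < alpha -> (1 <= k)%nat -> 1 <= tseq alpha k.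
Proof.
  intros. unfold tseq. assert (1 <= INR k) by (apply (le_INR 1); auto).
  rewrite rpow_pos by lra. apply Rpower_ge1; lra.
Qed.

Lemma tseq_eq alpha k : (1 <= k)%nat -> tseq alpha k = Rpower (INR k) alpha.
Proof. intros. unfold tseq. apply rpow_pos. apply (lt_INR 0); lia. Qed.

Lemma tseq_mono alpha k : 0 < alpha -> (1 <= k)%nat -> tseq alpha k <= tseq alpha (S k).
Proof.
  intros. rewrite !tseq_eq by lia. apply Rle_Rpower_l; [lra|].
  split. apply (lt_INR 0); lia. apply le_INR; lia.
Qed.

Lemma tseq_pow alpha k : 0 < alpha -> (1 <= k)%nat -> Rpower (tseq alpha k) (1/alpha) = INR k.
Proof.
  intros. rewrite tseq_eq by lia. rewrite Rpower_mult.
  replace (alpha * (1/alpha)) with 1 by (field; lra). apply Rpower_1. apply (lt_INR 0); lia.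
Qed.

Lemma ncount_eq alpha t k : 0 < t -> INR k <= Rpower t (1/alpha) < INR k + 1 -> ncount alpha t = INR k.
Proof.
  intros. unfold ncount. rewrite rpow_pos by lra.
  rewrite <- (Int_part_spec _ (Z.of_nat k)). symmetry; apply INR_IZR_INZ.
  rewrite <- INR_IZR_INZ. lra.
Qed.

Lemma ncount_ge0 alpha t : 0 <= ncount alpha t.
Proof.
  unfold ncount. destruct (base_Int_part (rpow t (1/alpha))) as [H1 H2].
  assert (0 <= rpow t (1/alpha)).
  { unfold rpow. destruct (Rle_dec t 0). lra. left; apply Rpower_gt0. }
  assert (IZR (Int_part (rpow t (1/alpha))) > -1) by lra.
  apply lt_IZR in H0. apply IZR_le. lia.
Qed.

Lemma ncount_ge alpha t : 0 < alpha -> 1 <= t -> Rpower t (1/alpha) / 2 <= ncount alpha t.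
Proof.
  intros Ha Ht. unfold ncount. rewrite rpow_pos by lra.
  destruct (base_Int_part (Rpower t (1/alpha))) as [H1 H2].
  assert (1 <= Rpower t (1/alpha)).
  { apply Rpower_ge1; [|lra]. unfold Rdiv. rewrite Rmult_1_l. left. apply Rinv_0_lt_compat. lra. }
  assert (IZR (Int_part (Rpower t (1/alpha))) > 0) by lra.
  apply lt_IZR in H0. assert (1 <= IZR (Int_part (Rpower t (1 / alpha)))) by (apply IZR_le; lia).
  lra.
Qed.

Lemma D_pos u t : 0 <= u -> 0 < t -> 0 < t ^ 2 + u ^ 2 + u * t * sqrt 2.
Proof. intros. assert (0 <= sqrt 2) by apply sqrt_pos. assert (0 <= u*t) by nra. nra. Qed.

Lemma F_int alpha u n : 0 < alpha -> 0 <= u -> (1 <= n)%nat -> ex_RInt (F alpha u) 0 (tseq alpha n).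
Proof.
  intros Ha Hu. induction n as [|n IH]; intros Hn. lia.
  destruct (Nat.eq_dec n 0) as [->|Hn0].
  - assert (tseq alpha 1 = 1) by (rewrite tseq_eq by lia; simpl; apply Rpower_1l).
    rewrite H. apply (ex_RInt_ext (fun _ => 0)).
    2: apply ex_RInt_const.
    rewrite Rmin_left, Rmax_right by lra. intros x Hx. unfold F.
    assert (Hb : 0 < 1/alpha) by (unfold Rdiv; rewrite Rmult_1_l; apply Rinv_0_lt_compat; lra).
    assert (Rpower x (1/alpha) < 1).
    { apply Rlt_le_trans with (Rpower 1 (1/alpha)); [apply Rlt_Rpower_l; lra | rewrite Rpower_1l; lra]. }
    assert (0 < Rpower x (1/alpha)) by apply Rpower_gt0.
    rewrite (ncount_eq _ _ 0) by (simpl; lra).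
    simpl. unfold Rdiv. ring.
  - apply ex_RInt_Chasles with (tseq alpha n). apply IH; lia.
    assert (H1 := tseq_ge1 alpha n Ha ltac:(lia)).
    assert (H2 := tseq_mono alpha n Ha ltac:(lia)).
    apply (ex_RInt_ext (fun t => INR n / (t ^ 2 * (t ^ 2 + u ^ 2 + u * t * sqrt 2)))).
    + rewrite Rmin_left, Rmax_right by lra. intros x Hx. unfold F.
      rewrite (ncount_eq _ _ n); [reflexivity|lra|].
      assert (Hb : 0 < 1/alpha) by (unfold Rdiv; rewrite Rmult_1_l; apply Rinv_0_lt_compat; lra).
      replace (INR n + 1) with (INR (S n)) by (rewrite S_INR; ring).
      rewrite <- (tseq_pow alpha n) by (auto; lia).
      rewrite <- (tseq_pow alpha (S n)) by (auto; lia).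
      split; [left|]; apply Rlt_Rpower_l; lra.
    + apply (@ex_RInt_continuous R_CompleteNormedModule). rewrite Rmin_left, Rmax_right by lra. intros z Hz.
      apply (@ex_derive_continuous R_AbsRing R_NormedModule). auto_derive.
      assert (0 < z * (z * 1) + u * (u * 1) + u * z * sqrt 2) by (pose proof (D_pos u z Hu ltac:(lra)); simpl in *; lra).
      assert (0 < z * (z * 1)) by nra. apply Rgt_not_eq. apply Rmult_lt_0_compat; lra.
Qed.

Lemma div_le a b c d : 0<b -> 0<d -> a*d <= c*b -> a/b <= c/d.
Proof. intros. apply (Rmult_le_reg_r (b*d)); [nra|].
 replace (a/b*(b*d)) with (a*d) by (field; lra). replace (c/d*(b*d)) with (c*b) by (field; lra). lra. Qed.

Lemma Rpower_split t p k : 0 < t -> Rpower t p = Rpower t (p - INR k) * t ^ k.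
Proof. intros. rewrite <- Rpower_pow by auto. rewrite <- Rpower_plus. f_equal; ring. Qed.

Lemma D_le u t : 0 <= u -> 0 < t -> t ^ 2 + u ^ 2 + u * t * sqrt 2 <= (t + u) ^ 2.
Proof. intros. assert (sqrt 2 <= 2).
 { assert (sqrt 2 * sqrt 2 = 2) by (apply sqrt_sqrt; lra). pose proof (sqrt_pos 2). nra. }
 assert (0 <= u*t) by nra.
 assert (u*t*sqrt 2 <= u*t*2) by (apply Rmult_le_compat_l; lra). simpl. nra. Qed.

Lemma F_lb1 alpha u t : 0 < alpha -> 1 <= t <= u -> Rpower t (1/alpha - 2) * /(8*u^2) <= F alpha u t.
Proof.
  intros Ha Ht. unfold F. pose proof (ncount_ge alpha t Ha ltac:(lra)) as Hn.
  rewrite (Rpower_split t (1/alpha) 2) in Hn by lra. simpl INR in Hn.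
  replace (1 + 1) with 2 in Hn by ring.
  set (s := Rpower t (1/alpha - 2)) in *. assert (0 < s) by apply Rpower_gt0.
  pose proof (D_pos u t ltac:(lra) ltac:(lra)). pose proof (D_le u t ltac:(lra) ltac:(lra)).
  set (D := t ^ 2 + u ^ 2 + u * t * sqrt 2) in *.
  change (s / (8*u^2) <= ncount alpha t / (t^2 * D)).
  assert (0 < t^2) by (apply pow_lt; lra). assert (0 < u^2) by (apply pow_lt; lra).
  apply div_le. lra. nra.
  assert ((t+u)^2 <= 4 * u^2) by (simpl; nra).
  assert (s * t^2 * D <= s * t^2 * (4*u^2)).
  { apply Rmult_le_compat_l. nra. lra. }
  nra.
Qed.

Lemma F_lb2 alpha u t : 0 < alpha -> 0 <= u <= t -> 1 <= t -> Rpower t (1/alpha - 4) * /8 <= F alpha u t.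
Proof.
  intros Ha Hu Ht. unfold F. pose proof (ncount_ge alpha t Ha ltac:(lra)) as Hn.
  rewrite (Rpower_split t (1/alpha) 4) in Hn by lra. simpl INR in Hn.
  replace (1 + 1 + 1 + 1) with 4 in Hn by ring.
  set (s := Rpower t (1/alpha - 4)) in *. assert (0 < s) by apply Rpower_gt0.
  pose proof (D_pos u t ltac:(lra) ltac:(lra)). pose proof (D_le u t ltac:(lra) ltac:(lra)).
  set (D := t ^ 2 + u ^ 2 + u * t * sqrt 2) in *.
  change (s / 8 <= ncount alpha t / (t^2 * D)).
  assert (0 < t^2) by (apply pow_lt; lra).
  apply div_le. lra. nra.
  assert ((t+u)^2 <= 4 * t^2) by (simpl; nra).
  assert (s * t^2 * D <= s * t^2 * (4*t^2)).
  { apply Rmult_le_compat_l. nra. lra. }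
  replace (t^4) with (t^2*t^2) in Hn by ring.
  nra.
Qed.

Lemma F_ge0 alpha u t : 0 <= u -> 0 <= t -> 0 <= F alpha u t.
Proof.
  intros. unfold F. destruct (Req_dec t 0) as [->|].
  - replace (0^2 * (0 ^ 2 + u ^ 2 + u * 0 * sqrt 2)) with 0 by ring. unfold Rdiv. rewrite Rinv_0, Rmult_0_r. lra.
  - pose proof (D_pos u t H ltac:(lra)). apply Rmult_le_pos. apply ncount_ge0.
    left. apply Rinv_0_lt_compat. apply Rmult_lt_0_compat; [nra|lra].
Qed.

Lemma is_RInt_rpow a b p c : 0 < a -> a <= b -> p + 1 <> 0 ->
  is_RInt (fun t => Rpower t p * c) a b ((Rpower b (p+1) - Rpower a (p+1)) / (p+1) * c).
Proof.
  intros.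
  replace ((Rpower b (p+1) - Rpower a (p+1)) / (p+1) * c) with
    (minus ((fun x => Rpower x (p+1) / (p+1) * c) b) ((fun x => Rpower x (p+1) / (p+1) * c) a))
    by (unfold minus, plus, opp; simpl; field; auto).
  apply (@is_RInt_derive R_CompleteNormedModule (fun x => Rpower x (p+1) / (p+1) * c)).
  - rewrite Rmin_left, Rmax_right by lra. intros x Hx.
    apply is_derive_Reals.
    replace (Rpower x p * c) with (((p+1) * Rpower x (p+1-1)) * (c/(p+1))).
    2:{ replace (p+1-1) with p by ring. field. auto. }
    apply (derivable_pt_lim_ext (fun x => Rpower x (p+1) * (c/(p+1)))).
    { intros; field; auto. }
    apply derivable_pt_lim_scal_right. apply derivable_pt_lim_power. lra.
  - rewrite Rmin_left, Rmax_right by lra. intros x Hx.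
    apply (@ex_derive_continuous R_AbsRing R_NormedModule).
    exists (p * Rpower x (p-1) * c). apply is_derive_Reals.
    apply derivable_pt_lim_scal_right. apply derivable_pt_lim_power. lra.
Qed.

Lemma is_RInt_inv a b c : 0 < a -> a <= b ->
  is_RInt (fun t => / t * c) a b ((ln b - ln a) * c).
Proof.
  intros.
  replace ((ln b - ln a) * c) with
    (minus ((fun x => ln x * c) b) ((fun x => ln x * c) a))
    by (unfold minus, plus, opp; simpl; ring).
  apply (@is_RInt_derive R_CompleteNormedModule (fun x => ln x * c)).
  - rewrite Rmin_left, Rmax_right by lra. intros x Hx.
    apply is_derive_Reals. apply derivable_pt_lim_scal_right.
    apply is_derive_Reals. apply is_derive_ln. lra.
  - rewrite Rmin_left, Rmax_right by lra. intros x Hx.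
    apply (@ex_derive_continuous R_AbsRing R_NormedModule).
    auto_derive. lra.
Qed.

Lemma RInt_F_ge alpha u M a b c : 0 < alpha -> 0 <= u -> (1 <= M)%nat ->
  0 <= a -> a <= b -> b <= c -> c <= tseq alpha M ->
  RInt (F alpha u) a b + RInt (F alpha u) b c <= RInt (F alpha u) 0 (tseq alpha M).
Proof.
  intros Ha Hu HM H1 H2 H3 H4.
  pose proof (F_int alpha u M Ha Hu HM) as HI.
  assert (Hat : ex_RInt (F alpha u) a (tseq alpha M)) by (apply (@ex_RInt_Chasles_2 R_CompleteNormedModule) with 0; auto; lra).
  assert (H0a : ex_RInt (F alpha u) 0 a) by (apply (@ex_RInt_Chasles_1 R_CompleteNormedModule) with (tseq alpha M); auto; lra).
  assert (Hac : ex_RInt (F alpha u) a c) by (apply (@ex_RInt_Chasles_1 R_CompleteNormedModule) with (tseq alpha M); auto; lra).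
  assert (Hct : ex_RInt (F alpha u) c (tseq alpha M)) by (apply (@ex_RInt_Chasles_2 R_CompleteNormedModule) with a; auto; lra).
  assert (Hab : ex_RInt (F alpha u) a b) by (apply (@ex_RInt_Chasles_1 R_CompleteNormedModule) with c; auto; lra).
  assert (Hbc : ex_RInt (F alpha u) b c) by (apply (@ex_RInt_Chasles_2 R_CompleteNormedModule) with a; auto; lra).
  rewrite <- (@RInt_Chasles R_CompleteNormedModule _ 0 a (tseq alpha M)) by auto.
  rewrite <- (@RInt_Chasles R_CompleteNormedModule _ a c (tseq alpha M)) by auto.
  rewrite <- (@RInt_Chasles R_CompleteNormedModule _ a b c) by auto.
  unfold plus; simpl.
  assert (0 <= RInt (F alpha u) 0 a) by (apply RInt_ge_0; auto; intros; apply F_ge0; lra).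
  assert (0 <= RInt (F alpha u) c (tseq alpha M)) by (apply RInt_ge_0; auto; intros; apply F_ge0; lra).
  lra.
Qed.

Lemma lower_of alpha u a b g l : a <= b -> ex_RInt (F alpha u) a b -> is_RInt g a b l ->
  (forall x, a < x < b -> g x <= F alpha u x) -> l <= RInt (F alpha u) a b.
Proof.
  intros. rewrite <- (is_RInt_unique g a b l) by auto. apply RInt_le; auto. exists l; auto.
Qed.

Lemma ex_sub alpha u M a b : 0 < alpha -> 0 <= u -> (1 <= M)%nat ->
  0 <= a -> a <= b -> b <= tseq alpha M -> ex_RInt (F alpha u) a b.
Proof.
  intros. pose proof (F_int alpha u M H H0 H1).
  apply (@ex_RInt_Chasles_2 R_CompleteNormedModule) with 0. lra. apply (@ex_RInt_Chasles_1 R_CompleteNormedModule) with (tseq alpha M). lra. auto.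
Qed.

Lemma IM_eq alpha M u : IM alpha M u = u ^ 3 * RInt (F alpha u) 0 (tseq alpha M).
Proof. reflexivity. Qed.

Lemma tseq_rpow alpha M q : 0 < alpha -> (1 <= M)%nat ->
  Rpower (tseq alpha M) q = Rpower (INR M) (alpha * q).
Proof. intros. rewrite tseq_eq by auto. apply Rpower_mult. Qed.

Lemma I_ge_sub alpha u M a b : 0 < alpha -> 0 <= u -> (1 <= M)%nat ->
  0 <= a -> a <= b -> b <= tseq alpha M ->
  RInt (F alpha u) a b <= RInt (F alpha u) 0 (tseq alpha M).
Proof.
  intros. pose proof (RInt_F_ge alpha u M a b b H H0 H1 H2 H3 ltac:(lra) H4).
  rewrite RInt_point in H5. unfold zero in H5; simpl in H5. lra.
Qed.

Lemma part1 alpha : 0 < alpha <= 1/3 -> forall M u, (1 <= M)%nat -> tseq alpha M <= u ->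
  IM alpha M u >= alpha / 8 * u * (rpow (INR M) (1 - alpha) - 1).
Proof.
  intros Ha M u HM Hu. rewrite IM_eq.
  pose proof (tseq_ge1 alpha M ltac:(lra) HM) as HT.
  set (T := tseq alpha M) in *.
  assert (Hb : 3 <= 1/alpha).
  { apply (Rmult_le_reg_r alpha); [lra|]. unfold Rdiv. rewrite Rmult_assoc, Rinv_l by lra. lra. }
  assert (L : (Rpower T (1/alpha - 2 + 1) - Rpower 1 (1/alpha - 2 + 1)) / (1/alpha - 2 + 1) * /(8*u^2)
              <= RInt (F alpha u) 1 T).
  { apply lower_of with (fun t => Rpower t (1/alpha - 2) * /(8*u^2)).
    lra. apply ex_sub with M; auto; unfold T; lra. apply is_RInt_rpow; [lra|lra|intro; lra].
    intros. apply F_lb1; lra. }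
  pose proof (I_ge_sub alpha u M 1 T ltac:(lra) ltac:(lra) HM ltac:(lra) HT (Rle_refl _)) as L2.
  unfold T in L. rewrite tseq_rpow in L by (auto; lra). rewrite Rpower_1l in L.
  rewrite rpow_pos by (apply (lt_INR 0); lia).
  replace (alpha * (1/alpha - 2 + 1)) with (1 - alpha) in L by (field; intro; lra).
  set (X := Rpower (INR M) (1 - alpha)) in *.
  assert (HX : 1 <= X) by (apply Rpower_ge1; [lra| apply (le_INR 1); auto]).
  set (Q := (X - 1) / (1 / alpha - 2 + 1) * / (8 * u ^ 2)) in *.
  assert (E : u^3 * Q = alpha * u * (X - 1) / (8 * (1 - alpha))).
  { unfold Q. field. repeat split; try lra. }
  assert (u^3 * Q <= u^3 * RInt (F alpha u) 0 T).
  { apply Rmult_le_compat_l. apply pow_le; lra. unfold T in *. lra. }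
  assert (alpha / 8 * u * (X - 1) <= alpha * u * (X - 1) / (8 * (1 - alpha))).
  { replace (alpha / 8 * u * (X - 1)) with ((alpha * u * (X - 1)) / 8) by (field).
    apply div_le. lra. lra. assert (0 <= alpha*u*(X-1)) by (apply Rmult_le_pos; [apply Rmult_le_pos|]; lra).
    unfold Rdiv. nra. }
  unfold T in *. lra.
Qed.

Lemma rpow_le_self u b : 0 <= u < 1 -> 1 <= b -> rpow u b <= u.
Proof.
  intros. unfold rpow. destruct (Rle_dec u 0). lra.
  unfold Rpower. assert (ln u < 0) by (rewrite <- ln_1; apply ln_increasing; lra).
  rewrite <- (exp_ln u) at 2 by lra.
  assert (b * ln u <= ln u) by nra.
  destruct H2. left; apply exp_increasing; auto. rewrite H2; lra.
Qed.

Lemma part2 alpha : 0 < alpha < 1/3 -> forall M u, (1 <= M)%nat -> 0 <= u -> u <= tseq alpha M ->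
  IM alpha M u >= alpha / 8 * ((rpow u (1 / alpha) - u) / (1 - alpha)
                + u ^ 3 * (rpow (INR M) (1 - 3 * alpha)
                           - rpow (Rmax u 1) (1 / alpha - 3)) / (1 - 3 * alpha)).
Proof.
  intros Ha M u HM Hu0 Hu. rewrite IM_eq.
  pose proof (tseq_ge1 alpha M ltac:(lra) HM) as HT.
  assert (Hb : 3 < 1/alpha).
  { apply (Rmult_lt_reg_r alpha); [lra|]. unfold Rdiv. rewrite Rmult_assoc, Rinv_l by lra. lra. }
  rewrite (rpow_pos (INR M)) by (apply (lt_INR 0); lia).
  set (Y := Rpower (INR M) (1 - 3 * alpha)).
  assert (HY : 1 <= Y) by (apply Rpower_ge1; [lra| apply (le_INR 1); auto]).
  assert (EY : Rpower (tseq alpha M) (1/alpha - 4 + 1) = Y).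
  { rewrite tseq_rpow by (auto; lra). unfold Y. f_equal. field. intro; lra. }
  assert (H3 : 0 <= u^3) by (apply pow_le; lra).
  destruct (Rlt_le_dec u 1) as [Hu1|Hu1].
  - assert (L : (Rpower (tseq alpha M) (1/alpha - 4 + 1) - Rpower 1 (1/alpha - 4 + 1)) / (1/alpha - 4 + 1) * /8
              <= RInt (F alpha u) 1 (tseq alpha M)).
    { apply lower_of with (fun t => Rpower t (1/alpha - 4) * /8).
      lra. apply ex_sub with M; auto; lra. apply is_RInt_rpow; [lra|lra|intro; lra].
      intros. apply F_lb2; lra. }
    pose proof (I_ge_sub alpha u M 1 (tseq alpha M) ltac:(lra) ltac:(lra) HM ltac:(lra) HT (Rle_refl _)) as L2.
    rewrite EY, Rpower_1l in L.
    rewrite Rmax_right by lra. rewrite (rpow_pos 1), Rpower_1l by lra.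
    assert (Hr : rpow u (1/alpha) - u <= 0) by (pose proof (rpow_le_self u (1/alpha) ltac:(lra) ltac:(lra)); lra).
    assert (Hr2 : (rpow u (1/alpha) - u) / (1 - alpha) <= 0).
    { unfold Rdiv. apply Rmult_le_0_r. lra. left; apply Rinv_0_lt_compat; lra. }
    set (Q := (Y - 1) / (1 / alpha - 4 + 1) * / 8) in *.
    assert (E : u^3 * Q = alpha / 8 * (u ^ 3 * (Y - 1) / (1 - 3 * alpha))).
    { unfold Q. field. repeat split; try lra. }
    assert (u^3 * Q <= u^3 * RInt (F alpha u) 0 (tseq alpha M)).
    { apply Rmult_le_compat_l; lra. }
    assert (0 <= alpha/8) by lra.
    assert (alpha / 8 * ((rpow u (1 / alpha) - u) / (1 - alpha)) <= 0).
    { apply Rmult_le_0_l; lra. }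
    rewrite Rmult_plus_distr_l. lra.
  - assert (L1 : (Rpower u (1/alpha - 2 + 1) - Rpower 1 (1/alpha - 2 + 1)) / (1/alpha - 2 + 1) * /(8*u^2)
              <= RInt (F alpha u) 1 u).
    { apply lower_of with (fun t => Rpower t (1/alpha - 2) * /(8*u^2)).
      lra. apply ex_sub with M; auto; lra. apply is_RInt_rpow; [lra|lra|intro; lra].
      intros. apply F_lb1; lra. }
    assert (L3 : (Rpower (tseq alpha M) (1/alpha - 4 + 1) - Rpower u (1/alpha - 4 + 1)) / (1/alpha - 4 + 1) * /8
              <= RInt (F alpha u) u (tseq alpha M)).
    { apply lower_of with (fun t => Rpower t (1/alpha - 4) * /8).
      lra. apply ex_sub with M; auto; lra. apply is_RInt_rpow; [lra|lra|intro; lra].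
      intros. apply F_lb2; lra. }
    pose proof (RInt_F_ge alpha u M 1 u (tseq alpha M) ltac:(lra) ltac:(lra) HM ltac:(lra) Hu1 Hu (Rle_refl _)) as L2.
    rewrite EY in L3. rewrite Rpower_1l in L1.
    rewrite Rmax_left by lra. rewrite !rpow_pos by lra.
    rewrite (Rpower_split u (1/alpha) 1) by lra.
    replace (1/alpha - INR 1) with (1/alpha - 2 + 1) by (simpl; ring).
    replace (1/alpha - 3) with (1/alpha - 4 + 1) by ring.
    set (A := Rpower u (1 / alpha - 2 + 1)) in *.
    set (B := Rpower u (1 / alpha - 4 + 1)) in *.
    set (Q := (A - 1) / (1 / alpha - 2 + 1) * / (8 * u ^ 2) + (Y - B) / (1 / alpha - 4 + 1) * / 8).
    assert (E : u^3 * Q = alpha / 8 * ((A * u ^ 1 - u) / (1 - alpha) + u ^ 3 * (Y - B) / (1 - 3 * alpha))).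
    { unfold Q. field. repeat split; try lra. }
    assert (u^3 * Q <= u^3 * RInt (F alpha u) 0 (tseq alpha M)).
    { apply Rmult_le_compat_l. lra. unfold Q. lra. }
    lra.
Qed.

Lemma part3 : forall M u, (1 <= M)%nat -> 0 <= u -> u <= tseq (1/3) M ->
  IM (1 / 3) M u >= 1/8 * u ^ 3 * ln (tseq (1 / 3) M / Rmax u 1).
Proof.
  intros M u HM Hu0 Hu. rewrite IM_eq.
  pose proof (tseq_ge1 (1/3) M ltac:(lra) HM) as HT.
  set (T := tseq (1/3) M) in *.
  assert (Hg : forall t, 0 < t -> Rpower t (1/(1/3) - 4) * /8 = / t * /8).
  { intros. replace (1/(1/3) - 4) with (Ropp 1) by field. rewrite Rpower_Ropp, Rpower_1 by lra. reflexivity. }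
  assert (H3 : 0 <= u^3) by (apply pow_le; lra).
  destruct (Rlt_le_dec u 1) as [Hu1|Hu1].
  - assert (L : (ln T - ln 1) * /8 <= RInt (F (1/3) u) 1 T).
    { apply lower_of with (fun t => / t * /8).
      lra. apply ex_sub with M; auto; unfold T; lra. apply is_RInt_inv; lra.
      intros. rewrite <- Hg by lra. apply F_lb2; lra. }
    pose proof (I_ge_sub (1/3) u M 1 T ltac:(lra) ltac:(lra) HM ltac:(lra) HT (Rle_refl _)) as L2.
    rewrite Rmax_right by lra. replace (T / 1) with T by field. rewrite ln_1 in L.
    assert (u^3 * ((ln T - 0) * /8) <= u^3 * RInt (F (1/3) u) 0 T).
    { apply Rmult_le_compat_l. lra. unfold T in *. lra. }
    unfold T in *. lra.
  - assert (L : (ln T - ln u) * /8 <= RInt (F (1/3) u) u T).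
    { apply lower_of with (fun t => / t * /8).
      lra. apply ex_sub with M; auto; unfold T; lra. apply is_RInt_inv; lra.
      intros. rewrite <- Hg by lra. apply F_lb2; lra. }
    pose proof (I_ge_sub (1/3) u M u T ltac:(lra) ltac:(lra) HM ltac:(lra) Hu (Rle_refl _)) as L2.
    rewrite Rmax_left by lra. rewrite ln_div by lra.
    assert (u^3 * ((ln T - ln u) * /8) <= u^3 * RInt (F (1/3) u) 0 T).
    { apply Rmult_le_compat_l. lra. unfold T in *. lra. }
    unfold T in *. lra.
Qed.

Theorem lemma2p2 :
  (forall alpha : R, 0 < alpha <= 1 / 3 ->
     exists C : R, 0 < C /\
       forall (M : nat) (u : R), (1 <= M)%nat -> tseq alpha M <= u ->
         IM alpha M u >= C * u * (rpow (INR M) (1 - alpha) - 1)) /\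
  (forall alpha : R, 0 < alpha < 1 / 3 ->
     exists C : R, 0 < C /\
       forall (M : nat) (u : R), (1 <= M)%nat -> 0 <= u -> u <= tseq alpha M ->
         IM alpha M u >=
           C * ((rpow u (1 / alpha) - u) / (1 - alpha)
                + u ^ 3 * (rpow (INR M) (1 - 3 * alpha)
                           - rpow (Rmax u 1) (1 / alpha - 3)) / (1 - 3 * alpha))) /\
  (exists C : R, 0 < C /\
     forall (M : nat) (u : R), (1 <= M)%nat -> 0 <= u -> u <= tseq (1 / 3) M ->
       IM (1 / 3) M u >= C * u ^ 3 * ln (tseq (1 / 3) M / Rmax u 1)).
Proof.
  split; [|split].
  - intros alpha Ha. exists (alpha/8). split. lra. intros. apply part1; auto.
  - intros alpha Ha. exists (alpha/8). split. lra. intros. apply part2; auto.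
  - exists (1/8). split. lra. apply part3.
Qed.
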